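(* Let $n>0$ be an integer and let $(\xi_k)_{k\geq 0}$ be a sequence of positive real numbers. Suppose there exist $k_0>0$ and real numbers $A_1,A_2>0$, $\alpha>\beta>0$ and $\epsilon>0$ such that $$\xi_1\leq \exp\Big(-\alpha\sum_{i=1}^n\frac{1}{k_0+i}\Big)\xi_0+A_1$$ and, for every integer $k\geq1$, $$\xi_{k+1}\leq \exp\Big(-\alpha\sum_{i=1}^n\frac{1}{k_0+nk+i}+\frac{\epsilon}{k^2}\Big)\xi_k+\frac{A_2}{(k_0+n(k+1))^{\beta+1}}.$$ Then, with $c:=e^{\epsilon\pi^2/6}$, for every $K\geq1$, $$\xi_K\leq \frac{c(k_0+1)^\alpha}{(k_0+nK)^\alpha}\xi_0+\frac{c(k_0+n+1)^\alpha A_1}{(k_0+nK)^\alpha}+\frac{\frac{c}{\alpha-\beta}e^{\frac{\alpha}{k_0+n+1}}A_2}{n(k_0+nK)^\beta}+\frac{c\,e^{\frac{\alpha}{k_0+n+1}}A_2}{(k_0+nK)^{\beta+1}}.$$ *)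

(* Defs.v *)
From Stdlib Require Export Reals.
Open Scope R_scope.

Fixpoint sum1n (n : nat) (f : nat -> R) : R :=
  match n with
  | O => 0
  | S m => sum1n m f + f (S m)
  end.

(* Main.v *)
Require Import Defs.
From Stdlib Require Import Reals Lra Lia.
From Coquelicot Require Import Coquelicot.
Open Scope R_scope.
Definition bb := PI / 2.
Definition II (n : nat) : R := RInt (fun x => cos x ^ (2 * n)) 0 bb.
Definition JJ (n : nat) : R := RInt (fun x => x ^ 2 * cos x ^ (2 * n)) 0 bb.

Lemma bb_pos : 0 < bb.
Proof. unfold bb; generalize PI_RGT_0; lra. Qed.

Lemma ex_I k : ex_RInt (fun x => cos x ^ k) 0 bb.
Proof.
  apply (@ex_RInt_continuous R_CompleteNormedModule); intros z _. apply (@ex_derive_continuous R_AbsRing R_NormedModule). auto_derive; auto.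
Qed.

Lemma ex_J k : ex_RInt (fun x => x ^ 2 * cos x ^ k) 0 bb.
Proof.
  apply (@ex_RInt_continuous R_CompleteNormedModule); intros z _. apply (@ex_derive_continuous R_AbsRing R_NormedModule). auto_derive; auto.
Qed.

Lemma cos_bb : cos bb = 0.
Proof. unfold bb; apply cos_PI2. Qed.
Lemma sin_bb : sin bb = 1.
Proof. unfold bb; apply sin_PI2. Qed.

Lemma wallis (m : nat) :
  2 * INR (S m) * II (S m) = (2 * INR (S m) - 1) * II m.
Proof.
  set (N := INR (S m)).
  set (df := fun x => 2 * N * cos x ^ (2 * m + 2) - (2 * N - 1) * cos x ^ (2 * m)).
  assert (H1 : is_RInt df 0 bb (minus (sin bb * cos bb ^ (2*m+1)) (sin 0 * cos 0 ^ (2*m+1)))).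
  { apply (is_RInt_derive (fun x => sin x * cos x ^ (2*m+1))).
    - intros x _. unfold df.
      auto_derive; auto.
      unfold N. rewrite S_INR.
      replace (m + (m + 0) + 1)%nat with (S (2*m)) by lia.
      cbn [Nat.pred]. rewrite S_INR, mult_INR, pow_add, <- tech_pow_Rmult.
      replace (INR 2) with 2 by (simpl; ring).
      pose proof (sin2_cos2 x). unfold Rsqr in *.
      set (c := cos x ^ (2 * m)).
      replace (sin x * (1 * - sin x * ((2 * INR m + 1) * c))) with (- (sin x * sin x) * ((2 * INR m + 1) * c)) by ring.
      replace (sin x * sin x) with (1 - cos x * cos x) by lra. ring.
    - intros x _. apply (@ex_derive_continuous R_AbsRing R_NormedModule). unfold df; auto_derive; auto. }
  assert (H2 : is_RInt df 0 bb (minus (scal (2 * N) (II (S m))) (scal (2 * N - 1) (II m)))).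
  { eapply is_RInt_ext. 2: { apply (@is_RInt_minus R_NormedModule); apply (@is_RInt_scal R_NormedModule); apply (@RInt_correct R_CompleteNormedModule); apply ex_I. }
    intros x _. unfold df. replace (2 * S m)%nat with (2 * m + 2)%nat by lia. reflexivity. }
  apply (@is_RInt_unique R_CompleteNormedModule) in H1. apply (@is_RInt_unique R_CompleteNormedModule) in H2.
  rewrite H1 in H2. revert H2. rewrite sin_0, cos_bb.
  unfold minus, plus, opp, scal; simpl; unfold mult; simpl.
  rewrite pow_i by lia. intros H. unfold N in *. lra.
Qed.

Lemma jrec (m : nat) :
  II (S m) + 2 * INR (S m) ^ 2 * JJ (S m) - INR (S m) * (2 * INR (S m) - 1) * JJ m = 0.
Proof.
  set (N := INR (S m)).
  set (df := fun x => plus (plus (cos x ^ (2 * S m)) (scal (2 * N ^ 2) (x ^ 2 * cos x ^ (2 * S m))))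
                      (opp (scal (N * (2 * N - 1)) (x ^ 2 * cos x ^ (2 * m))))).
  assert (H1 : is_RInt df 0 bb (minus (bb * cos bb ^ (2*m+2) + N * bb ^ 2 * sin bb * cos bb ^ (2*m+1))
                                       (0 * cos 0 ^ (2*m+2) + N * 0 ^ 2 * sin 0 * cos 0 ^ (2*m+1)))).
  { apply (is_RInt_derive (fun x => x * cos x ^ (2*m+2) + N * x ^ 2 * sin x * cos x ^ (2*m+1))).
    - intros x _. unfold df.
      auto_derive; auto.
      unfold plus, scal, opp; simpl; unfold mult; simpl.
      unfold N. rewrite S_INR.
      replace (m + (m + 0) + 2)%nat with (S (S (2*m))) by lia.
      replace (m + (m + 0) + 1)%nat with (S (2*m)) by lia.
      replace (m + S (m + 0))%nat with (S (2*m)) by lia.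
      replace (m + (m + 0))%nat with (2*m)%nat by lia.
      cbn [Nat.pred]. rewrite !S_INR, !mult_INR. cbn [pow].
      replace (INR 2) with 2 by (simpl; ring).
      set (c := cos x ^ (2 * m)).
      replace ((INR m + 1) * (x * (x * 1)) * sin x * (1 * - sin x * ((2 * INR m + 1) * c)))
        with (-((INR m+1)*(x*x)*(2*INR m+1)*c) * (sin x * sin x)) by ring.
      pose proof (sin2_cos2 x) as Hsc. unfold Rsqr in Hsc.
      replace (sin x * sin x) with (1 - cos x * cos x) by lra. ring.
    - intros x _. apply (@ex_derive_continuous R_AbsRing R_NormedModule). unfold df, plus, scal, opp; simpl; unfold mult; simpl; auto_derive; auto. }
  assert (H2 : is_RInt df 0 bb (plus (plus (II (S m)) (scal (2 * N ^ 2) (JJ (S m)))) (opp (scal (N * (2 * N - 1)) (JJ m))))).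
  { apply (@is_RInt_plus R_NormedModule). apply (@is_RInt_plus R_NormedModule).
    apply (@RInt_correct R_CompleteNormedModule); apply ex_I.
    apply (@is_RInt_scal R_NormedModule); apply (@RInt_correct R_CompleteNormedModule); apply ex_J.
    apply (@is_RInt_opp R_NormedModule). 
    apply (@is_RInt_scal R_NormedModule); apply (@RInt_correct R_CompleteNormedModule); apply ex_J. }
  apply (@is_RInt_unique R_CompleteNormedModule) in H1. apply (@is_RInt_unique R_CompleteNormedModule) in H2.
  rewrite H1 in H2. revert H2. rewrite sin_0, cos_bb.
  unfold minus, plus, opp, scal; simpl; unfold mult; simpl.
  rewrite !pow_i by lia. intros H. unfold N in *. lra.
Qed.

Lemma I0 : II 0 = bb.
Proof.
  unfold II. simpl. rewrite RInt_const. unfold scal; simpl; unfold mult; simpl. ring.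
Qed.

Lemma J0 : JJ 0 = bb ^ 3 / 3.
Proof.
  assert (H1 : is_RInt (fun x => x ^ 2 * cos x ^ (2 * 0)) 0 bb (minus (bb ^ 3 / 3) (0 ^ 3 / 3))).
  { apply (is_RInt_derive (fun x => x ^ 3 / 3)).
    - intros x _. auto_derive; auto. simpl. field.
    - intros x _. apply (@ex_derive_continuous R_AbsRing R_NormedModule). auto_derive; auto. }
  apply (@is_RInt_unique R_CompleteNormedModule) in H1. unfold JJ. rewrite H1.
  unfold minus, plus, opp; simpl. field.
Qed.

Lemma I_pos m : 0 < II m.
Proof.
  induction m.
  - rewrite I0; apply bb_pos.
  - pose proof (wallis m) as W. pose proof (pos_INR m) as Hm. rewrite S_INR in W.
    assert (II (S m) = (2 * (INR m + 1) - 1) * II m / (2 * (INR m + 1))) as E.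
    { rewrite <- W. field. lra. }
    rewrite E. apply Rdiv_lt_0_compat; [apply Rmult_lt_0_compat|]; lra.
Qed.

Lemma J_nonneg m : 0 <= JJ m.
Proof.
  unfold JJ. apply RInt_ge_0. generalize bb_pos; lra. apply ex_J.
  intros x _. apply Rmult_le_pos. apply pow2_ge_0.
  replace (2 * m)%nat with (m + m)%nat by lia. rewrite pow_add. apply Rle_0_sqr.
Qed.

Lemma sum1n_S n f : sum1n (S n) f = sum1n n f + f (S n).
Proof. reflexivity. Qed.

Lemma basel_eq m : sum1n m (fun i => / (INR i ^ 2)) = PI ^ 2 / 6 - 2 * (JJ m / II m).
Proof.
  induction m.
  - simpl. rewrite I0, J0. unfold bb. field. apply PI_neq0.
  - rewrite sum1n_S, IHm. pose proof (wallis m) as W. pose proof (jrec m) as Jr.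
    pose proof (I_pos m). pose proof (I_pos (S m)).
    set (N := INR (S m)) in *.
    assert (HN : 1 <= N). { unfold N; rewrite S_INR; pose proof (pos_INR m); lra. }
    assert (E1 : II m = 2 * N * II (S m) / (2 * N - 1)). { rewrite W. field. lra. }
    assert (E2 : JJ m = (II (S m) + 2 * N ^ 2 * JJ (S m)) / (N * (2 * N - 1))). { replace (II (S m) + 2 * N ^ 2 * JJ (S m)) with (N * (2 * N - 1) * JJ m) by lra. field. lra. }
    rewrite E1, E2. field. repeat split; lra.
Qed.

Lemma basel_le m : sum1n m (fun i => / (INR i ^ 2)) <= PI ^ 2 / 6.
Proof.
  rewrite basel_eq. pose proof (I_pos m). pose proof (J_nonneg m).
  assert (0 <= JJ m / II m) by (apply Rdiv_le_0_compat; lra). lra.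
Qed.
Lemma exp_le' x y : x <= y -> exp x <= exp y.
Proof. intros [H|H]; [left; apply exp_increasing; auto | subst; lra]. Qed.

Lemma ln_le' x y : 0 < x -> x <= y -> ln x <= ln y.
Proof. intros Hx [H|H]; [left; apply ln_increasing; auto | subst; lra]. Qed.

Lemma ln_le_of x y : 0 < x -> x <= exp y -> ln x <= y.
Proof. intros Hx H. rewrite <- (ln_exp y). apply ln_le'; auto. Qed.

Lemma ln_succ_le y : 0 < y -> ln (y + 1) - ln y <= / y.
Proof.
  intros Hy.
  assert (ln (y + 1) <= ln y + / y).
  { apply ln_le_of. lra. rewrite exp_plus, exp_ln by auto.
    pose proof (exp_ineq1_le (/ y)).
    replace (y + 1) with (y * (1 + / y)) by (field; lra).
    apply Rmult_le_compat_l; lra. }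
  lra.
Qed.

Lemma sum1n_S' n f : sum1n (S n) f = sum1n n f + f (S n).
Proof. reflexivity. Qed.

Lemma lnsum n x : 0 <= x ->
  ln (x + INR n + 1) - ln (x + 1) <= sum1n n (fun i => / (x + INR i)).
Proof.
  intros Hx. induction n.
  - simpl. replace (x + 0 + 1) with (x + 1) by ring. lra.
  - rewrite sum1n_S'. rewrite S_INR.
    pose proof (pos_INR n).
    pose proof (ln_succ_le (x + INR n + 1)) as H1.
    replace (x + (INR n + 1) + 1) with (x + INR n + 1 + 1) by ring.
    replace (x + (INR n + 1)) with (x + INR n + 1) by ring.
    assert (0 < x + INR n + 1) by lra. specialize (H1 H0). lra.
Qed.

Lemma mvt_pow a b g : 0 < a < b ->
  exists c, a < c < b /\ Rpower b g - Rpower a g = g * Rpower c (g - 1) * (b - a).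
Proof.
  intros [Ha Hab].
  destruct (MVT_cor2 (fun x => Rpower x g) (fun x => g * Rpower x (g - 1)) a b Hab) as [c [Hc1 Hc2]].
  - intros c Hc. apply derivable_pt_lim_power. lra.
  - exists c. split; auto.
Qed.

Lemma powsum_ge1 (p : nat -> R) (N g : R) :
  0 < p O -> 0 < N -> (forall j, p (S j) = p j + N) -> 1 <= g ->
  forall K, sum1n K (fun j => Rpower (p j) (g - 1)) <= Rpower (p K) g / (g * N) + Rpower (p K) (g - 1).
Proof.
  intros H0 HN Hp Hg.
  assert (Hpos : forall j, 0 < p j). { induction j; [auto | rewrite Hp; lra]. }
  induction K.
  - simpl. assert (0 < Rpower (p 0%nat) g) by (unfold Rpower; apply exp_pos).
    assert (0 < Rpower (p 0%nat) (g-1)) by (unfold Rpower; apply exp_pos).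
    assert (0 < Rpower (p 0%nat) g / (g * N)) by (apply Rdiv_lt_0_compat; nra). lra.
  - rewrite sum1n_S'.
    destruct (mvt_pow (p K) (p (S K)) g) as [c [Hc Heq]]. { rewrite Hp. specialize (Hpos K). lra. }
    rewrite Hp in Heq. replace (p K + N - p K) with N in Heq by ring.
    assert (Rpower (p K) (g - 1) <= Rpower c (g - 1)).
    { unfold Rpower. apply exp_le'. apply Rmult_le_compat_l. lra. apply ln_le'. apply Hpos. lra. }
    assert (Rpower (p (S K)) g / (g * N) = Rpower (p K) g / (g * N) + Rpower c (g - 1)).
    { rewrite Hp. field_simplify_eq; [|nra]. 
      replace (Rpower (p K + N) g) with (Rpower (p K) g + g * Rpower c (g - 1) * N) by lra. ring. }
    lra.
Qed.

Lemma powsum_lt1 (p : nat -> R) (N g : R) :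
  0 < p O -> 0 < N -> (forall j, p (S j) = p j + N) -> 0 < g -> g < 1 ->
  forall K, sum1n K (fun j => Rpower (p j) (g - 1)) <= Rpower (p K) g / (g * N).
Proof.
  intros H0 HN Hp Hg Hg1.
  assert (Hpos : forall j, 0 < p j). { induction j; [auto | rewrite Hp; lra]. }
  induction K.
  - simpl. assert (0 < Rpower (p 0%nat) g) by (unfold Rpower; apply exp_pos).
    assert (0 < Rpower (p 0%nat) g / (g * N)) by (apply Rdiv_lt_0_compat; nra). lra.
  - rewrite sum1n_S'.
    destruct (mvt_pow (p K) (p (S K)) g) as [c [Hc Heq]]. { rewrite Hp. specialize (Hpos K). lra. }
    rewrite Hp in Heq, Hc |- *. replace (p K + N - p K) with N in Heq by ring.
    assert (Rpower (p K + N) (g - 1) <= Rpower c (g - 1)).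
    { unfold Rpower. apply exp_le'.
      assert (ln c <= ln (p K + N)) by (apply ln_le'; [specialize (Hpos K); lra | lra]). apply Rmult_le_compat_neg_l; lra. }
    assert (Rpower (p K + N) g / (g * N) = Rpower (p K) g / (g * N) + Rpower c (g - 1)).
    { field_simplify_eq; [|nra].
      replace (Rpower (p K + N) g) with (Rpower (p K) g + g * Rpower c (g - 1) * N) by lra. ring. }
    lra.
Qed.

Lemma powsum (p : nat -> R) (N g : R) :
  0 < p O -> 0 < N -> (forall j, p (S j) = p j + N) -> 0 < g ->
  forall K, sum1n K (fun j => Rpower (p j) (g - 1)) <= Rpower (p K) g / (g * N) + Rpower (p K) (g - 1).
Proof.
  intros. destruct (Rle_lt_dec 1 g).
  - apply powsum_ge1; auto.
  - pose proof (powsum_lt1 p N g H H0 H1 H2 r K).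
    assert (0 < Rpower (p K) (g - 1)) by (unfold Rpower; apply exp_pos). lra.
Qed.
Theorem lemma2 (n : nat) (xi : nat -> R) (k0 : nat)
  (A1 A2 alpha beta eps : R) :
  (0 < n)%nat ->
  (forall k, 0 < xi k) ->
  (0 < k0)%nat ->
  0 < A1 -> 0 < A2 -> 0 < beta -> beta < alpha -> 0 < eps ->
  xi 1%nat <= exp (- alpha * sum1n n (fun i => / (INR k0 + INR i))) * xi 0%nat + A1 ->
  (forall k : nat, (1 <= k)%nat ->
     xi (S k) <=
       exp (- alpha * sum1n n (fun i => / (INR k0 + INR n * INR k + INR i))
            + eps / (INR k ^ 2)) * xi k
       + A2 / Rpower (INR k0 + INR n * (INR k + 1)) (beta + 1)) ->
  let c := exp (eps * PI ^ 2 / 6) in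
  forall K : nat, (1 <= K)%nat ->
    xi K <=
      c * Rpower (INR k0 + 1) alpha / Rpower (INR k0 + INR n * INR K) alpha * xi 0%nat
      + c * Rpower (INR k0 + INR n + 1) alpha * A1 / Rpower (INR k0 + INR n * INR K) alpha
      + (c / (alpha - beta) * exp (alpha / (INR k0 + INR n + 1)) * A2)
          / (INR n * Rpower (INR k0 + INR n * INR K) beta)
      + c * exp (alpha / (INR k0 + INR n + 1)) * A2
          / Rpower (INR k0 + INR n * INR K) (beta + 1).
Proof.
  intros Hn Hxi Hk0 HA1 HA2 Hb Hab He H1 Hstep c K HK.
  set (N := INR n). set (k0r := INR k0).
  assert (HN : 1 <= N). { unfold N. apply (le_INR 1 n) in Hn. simpl in Hn. lra. }
  assert (Hk0r : 1 <= k0r). { unfold k0r. apply (le_INR 1 k0) in Hk0. simpl in Hk0. lra. }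
  set (m := fun k : nat => k0r + N * INR k).
  assert (Hm : forall k, 1 <= m k). { intro k. unfold m. pose proof (pos_INR k). nra. }
  set (L := fun k : nat => ln (m k + 1)).
  set (Sq := fun j : nat => sum1n j (fun i => / (INR i ^ 2))).
  assert (HSq0 : forall j, 0 <= Sq j).
  { induction j. unfold Sq; simpl; lra. unfold Sq in *. rewrite sum1n_S'.
    assert (0 < INR (S j)) by (apply lt_0_INR; lia).
    assert (0 < / (INR (S j) ^ 2)) by (apply Rinv_0_lt_compat; apply pow_lt; lra). lra. }
  set (z := fun k : nat => xi (S k) * exp (alpha * L (S k)) * exp (- eps * Sq k)).
  set (T := fun K : nat => sum1n K (fun j => exp (alpha * L (S j)) / Rpower (m (S j)) (beta + 1))).
  assert (Hz : forall K, z K <= z O + A2 * T K).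
  { intro K0; induction K0 as [|K0 IH].
    - unfold T; simpl. lra.
    - assert (Hs := Hstep (S K0) ltac:(lia)).
      assert (Hsum := lnsum n (k0r + N * INR (S K0)) ltac:(pose proof (Hm (S K0)); unfold m in *; lra)).
      fold k0r N in Hs.
      assert (Hmx : m (S (S K0)) = k0r + N * INR (S K0) + N).
      { unfold m. rewrite (S_INR (S K0)). ring. }
      assert (HE : exp (- alpha * sum1n n (fun i => / (k0r + N * INR (S K0) + INR i)) + eps / (INR (S K0) ^ 2))
                   <= exp (- alpha * (L (S (S K0)) - L (S K0)) + eps / (INR (S K0) ^ 2))).
      { apply exp_le'. unfold L. rewrite Hmx. fold N in Hsum. unfold m.
        assert (alpha * (ln (k0r + N * INR (S K0) + N + 1) - ln (k0r + N * INR (S K0) + 1)) <= alpha * sum1n n (fun i => / (k0r + N * INR (S K0) + INR i))).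
        { apply Rmult_le_compat_l; lra. }
        lra. }
      assert (HP : Rpower (k0r + N * (INR (S K0) + 1)) (beta + 1) = Rpower (m (S (S K0))) (beta + 1)).
      { unfold m. rewrite (S_INR (S K0)). reflexivity. }
      rewrite HP in Hs.
      assert (HSqS : Sq (S K0) = Sq K0 + / (INR (S K0) ^ 2)) by reflexivity.
      set (E' := exp (- alpha * (L (S (S K0)) - L (S K0)) + eps / (INR (S K0) ^ 2))) in *.
      set (P := Rpower (m (S (S K0))) (beta + 1)) in *.
      assert (HPpos : 0 < P) by (unfold P, Rpower; apply exp_pos).
      assert (Hx1 := Hxi (S K0)). assert (Hx2 := Hxi (S (S K0))).
      assert (Hs' : xi (S (S K0)) <= E' * xi (S K0) + A2 / P).
      { eapply Rle_trans. apply Hs. apply Rplus_le_compat_r. apply Rmult_le_compat_r; lra. }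
      assert (Hid : E' * exp (alpha * L (S (S K0))) * exp (- eps * Sq (S K0)) = exp (alpha * L (S K0)) * exp (- eps * Sq K0)).
      { unfold E'. rewrite <- !exp_plus. f_equal. rewrite HSqS. field.
        assert (0 < INR (S K0)) by (apply lt_0_INR; lia). lra. }
      assert (Hexp1 : exp (- eps * Sq (S K0)) <= 1).
      { rewrite <- exp_0. apply exp_le'. pose proof (HSq0 (S K0)). nra. }
      assert (HT : T (S K0) = T K0 + exp (alpha * L (S (S K0))) / P) by reflexivity.
      unfold z. rewrite HT.
      set (X := exp (alpha * L (S (S K0)))). set (Y := exp (- eps * Sq (S K0))).
      assert (0 < X) by apply exp_pos. assert (0 < Y) by apply exp_pos.
      apply Rle_trans with ((E' * xi (S K0) + A2 / P) * X * Y).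
      { apply Rmult_le_compat_r. lra. apply Rmult_le_compat_r; lra. }
      replace ((E' * xi (S K0) + A2 / P) * X * Y) with (xi (S K0) * (E' * X * Y) + A2 * (X / P) * Y) by (field; lra).
      unfold X, Y. rewrite Hid. fold X Y.
      unfold z in IH.
      assert (A2 * (X / P) * Y <= A2 * (X / P)).
      { assert (0 < A2 * (X / P)) by (apply Rmult_lt_0_compat; [lra| apply Rdiv_lt_0_compat; lra]).
        rewrite <- (Rmult_1_r (A2 * (X / P))) at 2. apply Rmult_le_compat_l. lra. unfold Y; exact Hexp1. }
      nra. }
  destruct K as [|K]; [lia|].
  assert (HL1 : L 1%nat = ln (k0r + N + 1)).
  { unfold L, m. f_equal. simpl. ring. }
  assert (Hz0 : z O <= exp (alpha * ln (k0r + 1)) * xi 0%nat + exp (alpha * L 1%nat) * A1).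
  { unfold z. replace (Sq 0%nat) with 0 by reflexivity. rewrite Rmult_0_r, exp_0, Rmult_1_r.
    assert (Hsum := lnsum n k0r ltac:(lra)). fold N in Hsum. fold k0r in H1.
    assert (HE : exp (- alpha * sum1n n (fun i => / (k0r + INR i))) <= exp (- alpha * (L 1%nat - ln (k0r + 1)))).
    { apply exp_le'. rewrite HL1. assert (alpha * (ln (k0r + N + 1) - ln (k0r + 1)) <= alpha * sum1n n (fun i => / (k0r + INR i))) by (apply Rmult_le_compat_l; lra). lra. }
    assert (0 < exp (alpha * L 1%nat)) by apply exp_pos.
    assert (Hx0 := Hxi 0%nat).
    apply Rle_trans with ((exp (- alpha * (L 1%nat - ln (k0r + 1))) * xi 0%nat + A1) * exp (alpha * L 1%nat)).
    { apply Rmult_le_compat_r. lra. eapply Rle_trans. apply H1. apply Rplus_le_compat_r. apply Rmult_le_compat_r; lra. }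
    replace ((exp (- alpha * (L 1%nat - ln (k0r + 1))) * xi 0%nat + A1) * exp (alpha * L 1%nat))
      with ((exp (- alpha * (L 1%nat - ln (k0r + 1))) * exp (alpha * L 1%nat)) * xi 0%nat + exp (alpha * L 1%nat) * A1) by ring.
    rewrite <- exp_plus. replace (- alpha * (L 1%nat - ln (k0r + 1)) + alpha * L 1%nat) with (alpha * ln (k0r + 1)) by ring.
    lra. }
  set (e1 := exp (alpha / (k0r + N + 1))).
  set (g := alpha - beta).
  assert (Hg : 0 < g) by (unfold g; lra).
  assert (HT1 : forall K, T K <= e1 * sum1n K (fun j => Rpower (m (S j)) (g - 1))).
  { intro K0; induction K0 as [|K0 IH].
    - unfold T; simpl; lra.
    - unfold T in *. rewrite !sum1n_S'. rewrite Rmult_plus_distr_l.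
      apply Rplus_le_compat; [exact IH|].
      set (y := m (S (S K0))).
      assert (Hy : k0r + N + 1 <= y). { unfold y, m. rewrite !S_INR. pose proof (pos_INR K0). nra. }
      unfold L. fold y. unfold e1, Rpower.
      rewrite <- exp_plus. unfold Rdiv at 1. rewrite <- exp_Ropp, <- exp_plus.
      apply exp_le'.
      assert (ln (y + 1) - ln y <= / y) by (apply ln_succ_le; lra).
      assert (/ y <= / (k0r + N + 1)) by (apply Rinv_le_contravar; lra).
      assert (alpha * (ln (y + 1) - ln y) <= alpha * / (k0r + N + 1)).
      { apply Rmult_le_compat_l; lra. }
      unfold g. unfold Rdiv. lra. }
  assert (HT : T K <= e1 * (Rpower (m (S K)) g / (g * N) + Rpower (m (S K)) (g - 1))).
  { eapply Rle_trans. apply HT1. apply Rmult_le_compat_l. unfold e1; left; apply exp_pos.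
    apply (powsum (fun j => m (S j)) N g).
    - pose proof (Hm 1%nat). lra.
    - lra.
    - intro j. unfold m. rewrite (S_INR (S j)). ring.
    - exact Hg. }
  assert (HzK := Hz K).
  assert (Hc : exp (eps * Sq K) <= c).
  { unfold c. apply exp_le'. pose proof (basel_le K). fold (Sq K) in H. 
    replace (eps * PI ^ 2 / 6) with (eps * (PI ^ 2 / 6)) by field. apply Rmult_le_compat_l; lra. }
  assert (HxiK : xi (S K) = z K * exp (eps * Sq K) / exp (alpha * L (S K))).
  { unfold z. replace (eps * Sq K) with (- (- eps * Sq K)) by ring. rewrite exp_Ropp.
    field. split; apply Rgt_not_eq, exp_pos. }
  set (u := ln (m (S K))).
  assert (HmK := Hm (S K)).
  assert (HWM : exp (alpha * u) <= exp (alpha * L (S K))).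
  { apply exp_le'. apply Rmult_le_compat_l. lra. unfold u, L. apply ln_le'; lra. }
  set (X0 := exp (alpha * ln (k0r + 1)) * xi 0%nat + exp (alpha * L 1%nat) * A1) in *.
  set (B := A2 * (e1 * (Rpower (m (S K)) g / (g * N) + Rpower (m (S K)) (g - 1)))).
  assert (Hnum : z K <= X0 + B).
  { unfold B. assert (A2 * T K <= A2 * (e1 * (Rpower (m (S K)) g / (g * N) + Rpower (m (S K)) (g - 1)))).
    { apply Rmult_le_compat_l; lra. } lra. }
  assert (HzKpos : 0 < z K).
  { unfold z. repeat apply Rmult_lt_0_compat; try apply exp_pos. apply Hxi. }
  assert (Hbound : xi (S K) <= (X0 + B) * c / exp (alpha * u)).
  { rewrite HxiK. unfold Rdiv.
    assert (0 < exp (alpha * u)) by apply exp_pos.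
    assert (0 < exp (eps * Sq K)) by apply exp_pos.
    apply Rle_trans with ((X0 + B) * c * / exp (alpha * L (S K))).
    - apply Rmult_le_compat_r. left; apply Rinv_0_lt_compat, exp_pos.
      apply Rmult_le_compat; lra.
    - apply Rmult_le_compat_l. 
      + assert (0 <= c) by (unfold c; left; apply exp_pos). nra.
      + apply Rinv_le_contravar; lra. }
  eapply Rle_trans. exact Hbound.
  change (k0r + N * INR (S K)) with (m (S K)).
  right.
  unfold X0, B, Rpower. fold u. rewrite <- HL1.
  assert (Ha : exp (g * u) = exp (alpha * u) / exp (beta * u)).
  { unfold Rdiv. rewrite <- exp_Ropp, <- exp_plus. f_equal. unfold g; ring. }
  assert (Hb1 : exp ((g - 1) * u) = exp (alpha * u) / exp ((beta + 1) * u)).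
  { unfold Rdiv. rewrite <- exp_Ropp, <- exp_plus. f_equal. unfold g; ring. }
  rewrite Ha, Hb1.
  assert (0 < exp (alpha * u)) by apply exp_pos.
  assert (0 < exp (beta * u)) by apply exp_pos.
  assert (0 < exp ((beta + 1) * u)) by apply exp_pos.
  unfold g. field. repeat split; try lra.
Qed.
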